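(* (i) The adjoint $(N\Phi)^\star:X^\star\to X^\star$ is given by $$(N\Phi)^\star q=\alpha^{-1/\gamma}\Big(\int_Df(\theta)^{1/\gamma}\eta(\theta)^{1-\frac1\gamma}b_0^\star(\theta)^{-1/\gamma}\,q(d\theta)\Big)b_0^\star\quad\text{if }X=C(D),$$ $$(N\Phi)^\star q=\alpha^{-1/\gamma}\Big(\int_Df(\theta)^{1/\gamma}\eta(\theta)^{1-\frac1\gamma}b_0^\star(\theta)^{-1/\gamma}\,q(\theta)\mu(d\theta)\Big)b_0^\star\quad\text{if }X=L^p(D,\mu).$$ (ii) With $g=(\lambda_0^\star-\rho)/\gamma$, $g$ is an eigenvalue of $B^\star$ and $b_0^\star$ is an associated eigenvector, where $B=L-N\Phi$ with $D(B)=D(L)$.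
   Context: $X$ is either $L^p(D,\mu)$, $p\in[1,\infty)$, $\mu$ $\sigma$-finite, or $C(D)$ (sup-norm) for compact metric $D$ with Borel measure $\mu$; $X^\star$ dual, $\langle\cdot,\cdot\rangle$ pairing, $X^\star_{++}$ the functionals strictly positive on nonzero nonnegative elements. $L$ is closed, densely defined, generates a $C_0$-semigroup on $X$ preserving strict positivity; $L^\star$ its adjoint. $(Nz)(\theta)=\eta(\theta)z(\theta)$; $\eta,f:D\to(0,\infty)$ measurable; $\gamma\in(0,1)\cup(1,\infty)$; $\rho>0$. Assumptions: there exist $b_0^\star\in X^\star_{++}\cap D(L^\star)$, $\lambda_0^\star\in\mathbb R$ with $L^\star b_0^\star=\lambda_0^\star b_0^\star$; $\rho>\lambda_0^\star(1-\gamma)$; if $\gamma>1$, $(b_0^\star)^{1-\gamma}/f\in L^\infty$; if $X=C(D)$, $b_0^\star$ is a measure absolutely continuous w.r.t. $\mu$ with density denoted $b_0^\star$ and $b_0^\star,\eta,f\in C(D;(0,\infty))$; if $X=L^p$, $\eta,f\in L^\infty(D;(0,\infty))$, $\int_Df^{1/\gamma}(\eta b_0^\star)^{\frac{\gamma-1}{\gamma}}d\mu<\infty$ and $\int_D(f/(\eta b_0^\star))^{p/\gamma}d\mu<\infty$. $\alpha=\gamma^\gamma\big(\int_Df^{1/\gamma}(\eta b_0^\star)^{\frac{\gamma-1}{\gamma}}d\mu/(\rho-\lambda_0^\star(1-\gamma))\big)^\gamma$. $\Phi:X\to X$ is $[\Phi x](\theta)=\big(\frac{f(\theta)}{\alpha\eta(\theta)b_0^\star(\theta)}\big)^{1/\gamma}\langle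 x,b_0^\star\rangle$. *)

(* Defs.v *)
From HB Require Import structures.
From mathcomp Require Import all_boot all_order all_algebra.
From mathcomp Require Import all_classical all_reals all_analysis.
Set Implicit Arguments. Unset Strict Implicit. Unset Printing Implicit Defensive.
Import Order.TTheory GRing.Theory Num.Theory.
Import numFieldNormedType.Exports.
Local Open Scope classical_set_scope.
Local Open Scope ring_scope.

(* Abstract framework for a (possibly unbounded) operator on a space X of     *)
(* real functions on a set T.  X is given by a membership predicate [inX],    *)
(* its (semi)norm [nrm] (elements with [nrm (x - y) = 0] are identified, as   *)
(* in L^p), and its positive cone [nonneg].  An operator is a map             *)
(* [L : (T -> R) -> (T -> R)] together with its domain [dom].                 *)

Section Framework.
Context {R : realType} {T : Type}.
Variables (inX : (T -> R) -> Prop) (nrm : (T -> R) -> R)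
  (nonneg : (T -> R) -> Prop).

Definition strictly_pos (x : T -> R) : Prop :=
  [/\ inX x, nonneg x & nrm x <> 0].

Definition closed_op (dom : (T -> R) -> Prop) (L : (T -> R) -> T -> R) : Prop :=
  forall (xs : nat -> T -> R) (x y : T -> R),
    (forall n, dom (xs n)) -> inX x -> inX y ->
    (fun n => nrm (xs n - x)) @ \oo --> 0 ->
    (fun n => nrm (L (xs n) - y)) @ \oo --> 0 ->
    dom x /\ nrm (L x - y) = 0.

Definition densely_defined (dom : (T -> R) -> Prop) : Prop :=
  (forall x, dom x -> inX x) /\
  (forall x, inX x -> forall e : R, 0 < e -> exists y, dom y /\ nrm (x - y) < e).

Definition C0_semigroup (S : R -> (T -> R) -> T -> R) : Prop :=
  [/\ (forall t x, 0 <= t -> inX x -> inX (S t x)),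
      (forall t (a : R) x y, 0 <= t -> inX x -> inX y ->
          nrm (S t (a *: x + y) - (a *: S t x + S t y)) = 0),
      (forall t, 0 <= t -> exists M : R, forall x, inX x -> nrm (S t x) <= M * nrm x),
      (forall x, inX x -> nrm (S 0 x - x) = 0) &
      (forall t s x, 0 <= t -> 0 <= s -> inX x ->
          nrm (S (t + s) x - S t (S s x)) = 0)] /\
  (forall x, inX x -> (fun t => nrm (S t x - x)) @ 0^'+ --> 0).

Definition is_generator (S : R -> (T -> R) -> T -> R)
  (dom : (T -> R) -> Prop) (L : (T -> R) -> T -> R) : Prop :=
  (forall x, dom x <-> (inX x /\ exists y, inX y /\
      (fun t => nrm (t^-1 *: (S t x - x) - y)) @ 0^'+ --> 0)) /\
  (forall x, dom x -> inX (L x) /\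
      (fun t => nrm (t^-1 *: (S t x - x) - L x)) @ 0^'+ --> 0).

Definition preserves_strict_pos (S : R -> (T -> R) -> T -> R) : Prop :=
  forall t x, 0 <= t -> strictly_pos x -> strictly_pos (S t x).

Definition standing_L (dom : (T -> R) -> Prop) (L : (T -> R) -> T -> R) : Prop :=
  [/\ closed_op dom L, densely_defined dom &
      exists S, [/\ C0_semigroup S, is_generator S dom L & preserves_strict_pos S]].

End Framework.

Section Quantities.
Context {R : realType} {d : measure_display} {T : measurableType d}.
Variable mu : {measure set T -> \bar R}.

(* pairing <x, b> = \int_D x b dmu of x with the functional of density b *)
Definition pairing (x b : T -> R) : R := Rintegral mu setT (fun t => x t * b t).

Definition LpN (p : R) (x : T -> R) : R := fine (Lnorm mu p%:E (EFin \o x)).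

Definition alpha (f eta b0 : T -> R) (gamma rho lambda0 : R) : R :=
  gamma `^ gamma *
  (Rintegral mu setT (fun t => f t `^ gamma^-1 * (eta t * b0 t) `^ ((gamma - 1) / gamma))
     / (rho - lambda0 * (1 - gamma))) `^ gamma.

Definition Phi (f eta b0 : T -> R) (gamma rho lambda0 : R) (x : T -> R) : T -> R :=
  fun t => (f t / (alpha f eta b0 gamma rho lambda0 * eta t * b0 t)) `^ gamma^-1
           * pairing x b0.

Definition Nmul (eta : T -> R) (z : T -> R) : T -> R := fun t => eta t * z t.

End Quantities.

Definition borelType (K : ptopologicalType) := g_sigma_algebraType (@open K).

Definition Cnorm {R : realType} {K : Type} (x : K -> R) : R :=
  sup [set `|x t| | t in [set: K]].

(* Main.v *)
Require Import Defs.
From HB Require Import structures.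
From mathcomp Require Import all_boot all_order all_algebra.
From mathcomp Require Import all_classical all_reals all_analysis.
From mathcomp Require Import measurable_realfun ess_sup_inf ring lra.
Import Order.TTheory GRing.Theory Num.Theory.
Import numFieldNormedType.Exports.
Local Open Scope classical_set_scope.
Local Open Scope ring_scope.

Section Alg.
Context {R : realType}.

Lemma powRE' (r x : R) : 0 < x -> x `^ r = expR (r * ln x).
Proof. by move=> x0; rewrite /powR gt_eqF. Qed.

Lemma lnq (a e f b : R) : 0 < a -> 0 < e -> 0 < f -> 0 < b ->
  ln (f / (a * e * b)) = ln f - ln a - ln e - ln b.
Proof.
move=> a0 e0 f0 b0.
rewrite lnM ?posrE ?invr_gt0 ?mulr_gt0 // lnV ?posrE ?mulr_gt0 //.
rewrite !lnM ?posrE ?mulr_gt0 //; ring.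
Qed.

Lemma key_pt (a e f b s : R) : 0 < a -> 0 < e -> 0 < f -> 0 < b ->
  e * (f / (a * e * b)) `^ s = a `^ (- s) * (f `^ s * e `^ (1 - s) * b `^ (- s)).
Proof.
move=> a0 e0 f0 b0.
have q0 : 0 < f / (a * e * b) by rewrite divr_gt0 // !mulr_gt0.
rewrite !powRE' // lnq //.
rewrite -{1}(lnK e0) -!expRD; congr expR; ring.
Qed.

Lemma key_pt2 (a e f b s P : R) : 0 < a -> 0 < e -> 0 < f -> 0 < b ->
  e * ((f / (a * e * b)) `^ s * P) * b = (a `^ (- s) * P) * (f `^ s * (e * b) `^ (1 - s)).
Proof.
move=> a0 e0 f0 b0.
have q0 : 0 < f / (a * e * b) by rewrite divr_gt0 // !mulr_gt0.
rewrite (powRE' _ _ q0) (powRE' _ _ a0) (powRE' _ _ f0) (powRE' _ _ (mulr_gt0 e0 b0)).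
rewrite lnq // lnM ?posrE //.
rewrite -{1}(lnK e0) -{2}(lnK b0).
have H : expR (ln e + s * (ln f - ln a - ln e - ln b) + ln b) =
   expR (- s * ln a) * (expR (s * ln f) * expR ((1 - s) * (ln e + ln b))).
  rewrite -!expRD; apply: congr1; ring.
have H2 : expR (ln e + s * (ln f - ln a - ln e - ln b) + ln b) =
   expR (ln e) * expR (s * (ln f - ln a - ln e - ln b)) * expR (ln b).
  by rewrite !expRD.
transitivity (expR (ln e + s * (ln f - ln a - ln e - ln b) + ln b) * P).
  rewrite H2; ring.
rewrite H; ring.
Qed.

Lemma key_scal (g I c : R) : 0 < g -> 0 < I -> 0 < c ->
  (g `^ g * (I / c) `^ g) `^ (- g^-1) * I = c / g.
Proof.
move=> g0 I0 c0.
have Ic : 0 < I / c by rewrite divr_gt0.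
have a0 : 0 < g `^ g * (I / c) `^ g by rewrite mulr_gt0 // powR_gt0.
rewrite powRE' // lnM ?posrE ?powR_gt0 // !ln_powR lnM ?posrE ?invr_gt0 // lnV ?posrE //.
rewrite -{2}(lnK I0).
have -> : c / g = expR (ln c - ln g) by rewrite expRD expRN !lnK.
rewrite -expRD; congr expR; field; exact: lt0r_neq0.
Qed.

Lemma key_pt3 (a e f b s : R) : 0 < a -> 0 < e -> 0 < f -> 0 < b ->
  e * (f / (a * e * b)) `^ s = a `^ (- s) * (e * (f / (e * b)) `^ s).
Proof.
move=> a0 e0 f0 b0.
have q0 : 0 < f / (a * e * b) by rewrite divr_gt0 // !mulr_gt0.
have q1 : 0 < f / (e * b) by rewrite divr_gt0 // !mulr_gt0.
have lq1 : ln (f / (e * b)) = ln f - ln e - ln b.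
  rewrite lnM ?posrE ?invr_gt0 ?mulr_gt0 // lnV ?posrE ?mulr_gt0 //.
  rewrite !lnM ?posrE ?mulr_gt0 //; ring.
rewrite (powRE' _ _ q0) (powRE' _ _ q1) (powRE' _ _ a0) lnq // lq1.
have H1 : e * expR (s * (ln f - ln a - ln e - ln b)) =
   expR (ln e + s * (ln f - ln a - ln e - ln b)) by rewrite expRD lnK.
have H2 : expR (- s * ln a) * (e * expR (s * (ln f - ln e - ln b))) =
   expR (- s * ln a + (ln e + s * (ln f - ln e - ln b))) by rewrite !expRD lnK.
rewrite H1 H2; apply: congr1; ring.
Qed.

Lemma bound_pt (K e w M p : R) : 0 <= p -> 0 < e -> `|e| <= M -> 0 <= w ->
  `|K * (e * w)| `^ p <= (`|K| * `|M|) `^ p * w `^ p.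
Proof.
move=> p0 e0 eM w0.
rewrite -powRM ?mulr_ge0 //.
apply: ge0_ler_powR => //; rewrite ?nnegrE ?mulr_ge0 //.
rewrite normrM normrM (ger0_norm w0) (gtr0_norm e0) mulrA ler_wpM2r //.
rewrite ler_wpM2l //; apply: (le_trans _ (ler_norm M)).
by rewrite -(gtr0_norm e0).
Qed.

End Alg.

Section RintLemmas.
Context d {T : measurableType d} {R : realType}.
Variable mu : {measure set T -> \bar R}.

Lemma Rint_nonint0 (D : set T) (h : T -> R) : measurable D ->
  measurable_fun D h -> ~ mu.-integrable D (EFin \o h) -> Rintegral mu D h = 0.
Proof.
move=> mD mh nint.
have mh' : measurable_fun D (fun x => (h x)%:E) by exact/measurable_EFinP.
have habs : (\int[mu]_(x in D) `|(EFin \o h) x| = +oo)%E.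
  apply/eqP; rewrite eq_le leey /= leNgt; apply/negP => hlt.
  by apply: nint; apply/integrableP; split.
rewrite /Rintegral integralE.
have E : (\int[mu]_(x in D) `|(EFin \o h) x| = \int[mu]_(x in D) ((EFin \o h)^\+ \+ (EFin \o h)^\-) x)%E.
  by apply: eq_integral => x _; exact: (congr1 (fun F => F x) (fune_abse (EFin \o h))).
move: habs; rewrite E.
rewrite ge0_integralD //; try (by move=> x _; exact: funepos_ge0);
  try (by move=> x _; exact: funeneg_ge0); try exact: measurable_funepos;
  try exact: measurable_funeneg.
have := @integral_ge0 _ _ _ mu D ((EFin \o h)^\+)%E (fun x _ => funepos_ge0 _ x).
have := @integral_ge0 _ _ _ mu D ((EFin \o h)^\-)%E (fun x _ => funeneg_ge0 _ x).
case: (\int[mu]_(x in D) ((EFin \o h)^\+)%E x)%E => [A| |];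
case: (\int[mu]_(x in D) ((EFin \o h)^\-)%E x)%E => [B| |] //=.
Qed.

Lemma RintZ (D : set T) (h : T -> R) (c : R) : measurable D ->
  measurable_fun D h -> Rintegral mu D (fun t => c * h t) = c * Rintegral mu D h.
Proof.
move=> mD mh.
have [hi|hni] := pselect (mu.-integrable D (EFin \o h)).
  by rewrite RintegralZl.
have [->|c0] := eqVneq c 0.
  rewrite mul0r; under eq_Rintegral do rewrite mul0r.
  by rewrite /Rintegral integral0.
rewrite Rint_nonint0 //; first by rewrite Rint_nonint0 // mulr0.
  by apply: measurable_funM.
move=> chi; apply: hni.
have := integrableZl mD (c^-1) chi.
apply: eq_integrable => // x _ /=.
by rewrite -EFinM mulrA mulVf // mul1r.
Qed.

Lemma Rint_ae_eq (D : set T) (f g : T -> R) : measurable D ->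
  measurable_fun D f -> measurable_fun D g ->
  {ae mu, forall x, D x -> f x = g x} -> Rintegral mu D f = Rintegral mu D g.
Proof.
move=> mD mf mg fg; rewrite /Rintegral; congr fine.
apply: ae_eq_integral => //; try exact/measurable_EFinP.
by apply: filterS fg => x H Dx; rewrite H.
Qed.

End RintLemmas.

Section LpLemmas.
Local Set Implicit Arguments. Local Unset Strict Implicit.
Context d {T : measurableType d} {R : realType}.
Variable mu : {measure set T -> \bar R}.

Lemma Lfun_meas (p : \bar R) (f : T -> R) : f \in Lfun mu p -> measurable_fun setT f.
Proof. by case/andP; rewrite inE. Qed.

Lemma Lfun_fin (p : \bar R) (f : T -> R) : f \in Lfun mu p ->
  ('N[mu]_p[EFin \o f] < +oo)%E.
Proof. by case/andP => _; rewrite inE. Qed.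

Lemma Lfun_intro (p : \bar R) (f : T -> R) : measurable_fun setT f ->
  ('N[mu]_p[EFin \o f] < +oo)%E -> f \in Lfun mu p.
Proof. by move=> mf fin; rewrite inE; apply/andP; split; rewrite inE. Qed.

Lemma ess_bound (g : T -> R) : (0 < mu setT)%E -> g \in Lfun mu +oo%E ->
  exists M : R, {ae mu, forall t, `|g t| <= M}.
Proof.
move=> mu0 /Lfun_fin; rewrite unlock mu0.
have := ess_sup_ge mu (abse \o (EFin \o g)).
case: (ess_sup mu (abse \o (EFin \o g))) => [r| |] H //= _.
- by exists r; apply: filterS H => t /=; rewrite lee_fin.
- by exists 0; apply: filterS H => t /=; rewrite leeNy_eq.
Qed.

Lemma holder_int (p : R) (f g : T -> R) : 1 <= p -> (0 < mu setT)%E ->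
  f \in Lfun mu p%:E -> g \in Lfun mu (hoelder_conjugate p%:E) ->
  mu.-integrable setT (EFin \o (fun t => f t * g t)).
Proof.
move=> p1 mu0 lf lg.
have mf := Lfun_meas lf; have mg := Lfun_meas lg.
have mfg : measurable_fun setT (fun t => f t * g t) by exact: measurable_funM.
have [p1e|p1'] := eqVneq p 1.
  subst p.
  move: lg; rewrite (_ : hoelder_conjugate 1%:E = +oo%E); last exact: hoelder_conjugate1.
  move=> lg; have [M HM] := ess_bound mu0 lg.
  have fi : mu.-integrable setT (EFin \o f) by apply/Lfun1_integrable.
  apply/integrableP; split; first exact/measurable_EFinP.
  apply: (@le_lt_trans _ _ (\int[mu]_x ((`|M|)%:E * `|(EFin \o f) x|))%E).
    have m1 : measurable_fun setT (fun x => `|(EFin \o (fun t => (f t * g t)%R)) x|%E).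
      by apply: measurableT_comp => //; exact/measurable_EFinP.
    have m2 : measurable_fun setT (fun x => ((`|M|)%:E * `|(EFin \o f) x|)%E).
      apply: measurable_funeM; apply: measurableT_comp => //; exact/measurable_EFinP.
    apply: (ae_ge0_le_integral measurableT _ m1 _ m2).
    - by move=> x _.
    - by move=> x _; rewrite mule_ge0.
    apply: filterS HM => t Ht _ /=.
    rewrite -EFinM lee_fin normrM mulrC ler_wpM2r //.
    exact: le_trans Ht (ler_norm _).
  rewrite ge0_integralZl_EFin //.
  - by rewrite lte_mul_pinfty //; case/integrableP: fi.
  - apply: measurableT_comp => //; exact/measurable_EFinP.
have p1s : 1 < p by rewrite lt_neqAle eq_sym p1' p1.
have p0 : 0 < p by exact: lt_trans ltr01 p1s.
have pm0 : 0 < p - 1 by rewrite subr_gt0.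
have hc : hoelder_conjugate p%:E = (p / (p - 1))%:E.
  rewrite /hoelder_conjugate /= eqe (gt_eqF p0) /=.
  by rewrite -EFinB inver (gt_eqF pm0) -EFinM.
move: lg; rewrite hc => lg.
apply/Lfun1_integrable; apply: Lfun_intro => //.
apply: le_lt_trans.
  apply: (@hoelder _ _ _ mu f g p (p / (p - 1))) => //.
    by rewrite divr_gt0.
  rewrite invf_div; field; rewrite ?(gt_eqF p0) ?(gt_eqF pm0) //.
rewrite lte_mul_pinfty //.
- exact: Lnorm_ge0.
- by rewrite ge0_fin_numE ?Lnorm_ge0 // (Lfun_fin lf).
- exact: (Lfun_fin lg).
Qed.

End LpLemmas.

Section Indic.
Local Set Implicit Arguments. Local Unset Strict Implicit.
Context d {T : measurableType d} {R : realType}.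
Variable mu : {measure set T -> \bar R}.

Lemma indic_Lfun (p : R) (A : set T) : 0 < p -> measurable A -> (mu A < +oo)%E ->
  (\1_A : T -> R) \in Lfun mu p%:E.
Proof.
move=> p0 mA muA; apply: Lfun_intro; first exact/measurable_indicP.
rewrite unlock; apply: poweR_lty.
rewrite (_ : (fun x => `|(EFin \o \1_A) x| `^ p)%E = (fun x => (\1_A x)%:E)).
  by rewrite integral_indic // setIT.
apply/funext => x /=; rewrite /indic; case: (x \in A) => /=.
  by rewrite ?mulr1n normr1 powR1.
by rewrite ?mulr0n normr0 powR0 // gt_eqF.
Qed.

Lemma indic_nrm (p : R) (A : set T) : 0 < p -> measurable A -> (0 < mu A)%E ->
  (mu A < +oo)%E -> LpN mu p (\1_A) <> 0.
Proof.
move=> p0 mA mu0 muA; rewrite /LpN unlock.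
rewrite (_ : (fun x => `|(EFin \o \1_A) x| `^ p)%E = (fun x => (\1_A x)%:E)).
  rewrite integral_indic // setIT.
  have fA : mu A = (fine (mu A))%:E by rewrite fineK // ge0_fin_numE.
  rewrite fA poweR_EFin /=; apply/eqP; rewrite gt_eqF // powR_gt0 //.
  by rewrite fine_gt0 // mu0 muA.
apply/funext => x /=; rewrite /indic; case: (x \in A) => /=.
  by rewrite ?mulr1n normr1 powR1.
by rewrite ?mulr0n normr0 powR0 // gt_eqF.
Qed.

Lemma Rint_le0 (h : T -> R) : measurable_fun setT h -> (forall t, h t <= 0) ->
  Rintegral mu setT h <= 0.
Proof.
move=> mh h0.
have : 0 <= Rintegral mu setT (fun t => -1 * h t).
  by apply: Rintegral_ge0 => t _; rewrite mulN1r oppr_ge0.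
by rewrite RintZ // mulN1r oppr_ge0.
Qed.

Lemma b0_ae_pos (p : R) (b0 : T -> R) : 1 <= p -> measurable_fun setT b0 ->
  sigma_finite setT mu ->
  (forall x, strictly_pos (fun x => x \in Lfun mu p%:E) (LpN mu p)
     (fun x => {ae mu, forall t, 0 <= x t}) x -> 0 < pairing mu x b0) ->
  {ae mu, forall t, 0 < b0 t}.
Proof.
move=> p1 mb0 [F FU mF] Hpos.
have p0 : 0 < p by exact: lt_le_trans ltr01 p1.
pose N := [set t | b0 t <= 0].
have mN : measurable N.
  have := mb0 measurableT `]-oo, 0]%classic (measurable_itv _).
  by rewrite setTI; congr measurable; apply/seteqP; split => t /=; rewrite in_itv.
have key k : mu (N `&` F k) = 0.
  have mNF : measurable (N `&` F k) by apply: measurableI => //; case: (mF k).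
  have fin : (mu (N `&` F k) < +oo)%E.
    apply: le_lt_trans (proj2 (mF k)); apply: le_measure => //; rewrite ?inE //.
    by case: (mF k).
  apply/eqP; rewrite eq_le measure_ge0 andbT leNgt; apply/negP => pos.
  have := Hpos (\1_(N `&` F k)); rewrite /strictly_pos.
  have H : 0 < pairing mu (\1_(N `&` F k)) b0.
    apply: Hpos; split.
    - exact: indic_Lfun.
    - by apply: aeW => t; rewrite /indic; case: (_ \in _).
    - exact: indic_nrm.
  move=> _; move: H; apply/negP; rewrite -leNgt /pairing.
  apply: Rint_le0.
    by apply: measurable_funM => //; exact/measurable_indicP.
  move=> t; rewrite /indic.
  have [/set_mem [Nt _]|_] := boolP (t \in N `&` F k); by rewrite /= ?mul1r ?mul0r.
exists (\bigcup_k (N `&` F k)); split.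
- by apply: bigcupT_measurable => k; apply: measurableI => //; case: (mF k).
- apply/eqP; rewrite eq_le measure_ge0 andbT.
  apply: le_trans.
    apply: (@measure_sigma_subadditive _ _ _ mu _ (fun k => N `&` F k)).
    + by move=> k; apply: measurableI => //; case: (mF k).
    + by apply: bigcupT_measurable => k; apply: measurableI => //; case: (mF k).
    + by [].
  by rewrite eseries0 // => k _ _; rewrite key.
- move=> t /= Nt.
  have : setT t by [].
  rewrite FU => -[k _ Fk]; exists k => //; split => //.
  by rewrite /N /=; rewrite leNgt; apply/negP.
Qed.

End Indic.

Lemma measurable_inv {R : realType} : measurable_fun setT (fun x : R => x^-1).
Proof.
have -> : [set: R] = [set x | x != 0] `|` [set 0].
  apply/seteqP; split => x; last by [].
  move=> _; have [->|x0] := eqVneq x 0; [exact: (or_intror erefl)|exact: (or_introl x0)].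
have mA : measurable [set x : R | x != 0] by exact: open_measurable (@open_neq _ 0).
have mB : measurable [set (0:R)] by [].
have := measurable_funU (fun x : R => x^-1) mA mB.
move=> [_ H]; apply: H; split; last exact: measurable_fun_set1.
apply: open_continuous_measurable_fun; first exact: open_neq.
move=> x; rewrite inE /= => x0; exact: inv_continuous.
Qed.

Section Misc.
Context d {T : measurableType d} {R : realType}.
Variable mu : {measure set T -> \bar R}.

Lemma exists_fin_pos : sigma_finite setT mu -> (0 < mu setT)%E ->
  exists A, [/\ measurable A, (0 < mu A)%E & (mu A < +oo)%E].
Proof.
move=> [F FU mF] mu0.
apply: contrapT => H.
have key k : mu (F k) = 0.
  apply/eqP; rewrite eq_le measure_ge0 andbT leNgt; apply/negP => pos.
  by apply: H; exists (F k); split => //; case: (mF k).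
move: mu0; apply/negP; rewrite -leNgt.
rewrite FU; apply: le_trans.
  apply: (@measure_sigma_subadditive _ _ _ mu _ F).
  + by move=> k; case: (mF k).
  + by apply: bigcupT_measurable => k; case: (mF k).
  + by [].
by rewrite eseries0 // => k _ _; rewrite key.
Qed.

End Misc.


Section CLemmas.
Context {R : realType} {K : ptopologicalType}.

Let KT0 : [set: K] !=set0. Proof. by exists point. Qed.

Lemma cont_meas (g : K -> R) : continuous g ->
  measurable_fun (setT : set (borelType K)) g.
Proof.
move=> cg; apply: (measurability _ (RGenOpens.measurableE R)).
move=> _ [_ [x [y ->]] <-]; rewrite setTI.
apply: sub_sigma_algebra; move: cg => /continuousP; apply.
exact: interval_open.
Qed.

Lemma cont_powR (u : K -> R) (r : R) : continuous u -> (forall t, 0 < u t) ->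
  continuous (fun t => u t `^ r).
Proof.
move=> cu u0.
have -> : (fun t => u t `^ r) = (fun t => expR (r * ln (u t))).
  by apply/funext => t; rewrite powRE'.
move=> t; apply: (@continuous_comp _ _ _ (fun t => r * ln (u t)) expR).
  apply: continuousM; first exact: cst_continuous.
  exact: (continuous_comp (cu t) (continuous_ln (u0 t))).
exact: continuous_expR.
Qed.

Lemma cont_bound (g : K -> R) : compact [set: K] -> continuous g ->
  exists M, forall t, `|g t| <= M.
Proof.
move=> cK cg.
have cn : {within [set: K], continuous (fun t => `|g t|)}.
  apply: continuous_subspaceT => t.
  exact: (continuous_comp (cg t) (@norm_continuous _ _ _)).
have [c _ Hc] := compact_EVT_max KT0 cK cn.
by exists (`|g c|) => t; apply: Hc; rewrite inE.
Qed.

Lemma cont_min (g : K -> R) : compact [set: K] -> continuous g -> (forall t, 0 < g t) ->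
  exists2 m, 0 < m & forall t, m <= g t.
Proof.
move=> cK cg g0.
have [c _ Hc] := compact_EVT_min KT0 cK (continuous_subspaceT cg).
by exists (g c) => // t; apply: Hc; rewrite inE.
Qed.

End CLemmas.

Section CInt.
Context {R : realType} {K : ptopologicalType}.
Variable nu : {measure set (borelType K) -> \bar R}.

Lemma cont_integrable (g : K -> R) : compact [set: K] -> continuous g ->
  (nu setT < +oo)%E -> nu.-integrable setT (EFin \o g).
Proof.
move=> cK cg nuf.
have [M HM] := cont_bound g cK cg.
have mg := cont_meas g cg.
apply/integrableP; split; first exact/measurable_EFinP.
apply: (@le_lt_trans _ _ (\int[nu]_(x in setT) (cst M%:E) x))%E.
  have m1 : measurable_fun [set: borelType K] (fun x : borelType K => `|(EFin \o g) x|%E).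
    apply: measurableT_comp => //; exact/measurable_EFinP.
  by apply: ge0_le_integral => // t _ /=; rewrite lee_fin HM.
rewrite integral_cst //.
have M0 : 0 <= M by exact: le_trans (normr_ge0 _) (HM (point)).
by rewrite lte_mul_pinfty.
Qed.

End CInt.

Arguments cont_meas {R K g}.
Arguments cont_powR {R K u r}.
Arguments cont_bound {R K g}.
Arguments cont_min {R K g}.
Arguments cont_integrable {R K nu g}.


Lemma Lp_part (R : realType) :
  (forall (d : measure_display) (D : measurableType d)
     (mu : {measure set D -> \bar R}) (p gamma rho lambda0 : R)
     (eta f b0 : D -> R)
     (domL : (D -> R) -> Prop) (L : (D -> R) -> D -> R),
   let inX := fun x : D -> R => x \in Lfun mu p%:E in
   let nrm := LpN mu p in
   let nonneg := fun x : D -> R => {ae mu, forall t, 0 <= x t} in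
   (* X^* is identified with L^{p'}(D, mu), p' the Hoelder conjugate of p *)
   let inXs := fun q : D -> R => q \in Lfun mu (hoelder_conjugate p%:E) in
   sigma_finite setT mu -> (0 < mu setT)%E -> 1 <= p ->
   standing_L inX nrm nonneg domL L ->
   0 < gamma -> gamma != 1 -> 0 < rho ->
   (* b0* in X^*_{++}, L^* b0* = lambda0* b0* *)
   inXs b0 ->
   (forall x, strictly_pos inX nrm nonneg x -> 0 < pairing mu x b0) ->
   (forall x, domL x -> pairing mu (L x) b0 = lambda0 * pairing mu x b0) ->
   rho > lambda0 * (1 - gamma) ->
   (1 < gamma -> (fun t => b0 t `^ (1 - gamma) / f t) \in Lfun mu +oo%E) ->
   (forall t, 0 < eta t) -> (forall t, 0 < f t) ->
   eta \in Lfun mu +oo%E -> f \in Lfun mu +oo%E ->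
   (\int[mu]_t (f t `^ gamma^-1 * (eta t * b0 t) `^ ((gamma - 1) / gamma))%:E < +oo)%E ->
   (\int[mu]_t ((f t / (eta t * b0 t)) `^ (p / gamma))%:E < +oo)%E ->
   let NPhi := fun x => Nmul eta (Phi mu f eta b0 gamma rho lambda0 x) in
   let a := alpha mu f eta b0 gamma rho lambda0 in
   ((forall x, inX x -> inX (NPhi x)) /\
    (forall q, inXs q -> forall x, inX x ->
       pairing mu (NPhi x) q =
       (a `^ (- gamma^-1) *
        Rintegral mu setT (fun t => f t `^ gamma^-1 * eta t `^ (1 - gamma^-1)
                                     * b0 t `^ (- gamma^-1) * q t))
       * pairing mu x b0)) /\
   (let g := (lambda0 - rho) / gamma in
    (forall x, domL x -> pairing mu (L x - NPhi x) b0 = g * pairing mu x b0) /\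
    (exists x, inX x /\ pairing mu x b0 <> 0))).

Proof.
move=> d D mu p gamma rho lambda0 eta f b0 domL L inX nrm nonneg inXs
  Hsf Hmu0 Hp1 HL Hg0 Hg1 Hrho Hb0 Hpos HLb Hrl Hg1' Heta Hf Hetai Hfi HI HI2 NPhi a.
have p0 : 0 < p by exact: lt_le_trans ltr01 Hp1.
have mb0 := Lfun_meas Hb0.
have meta := Lfun_meas Hetai.
have mf := Lfun_meas Hfi.
have b0ae := b0_ae_pos Hp1 mb0 Hsf Hpos.
pose Ifun t := f t `^ gamma^-1 * (eta t * b0 t) `^ ((gamma - 1) / gamma).
have mIfun : measurable_fun setT Ifun.
  apply: measurable_funM.
    exact: (measurableT_comp (measurable_powR _) mf).
  apply: (measurableT_comp (measurable_powR _)).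
  exact: measurable_funM.
have Ifun0 t : 0 <= Ifun t by rewrite mulr_ge0 // powR_ge0.
have Iint : mu.-integrable setT (EFin \o Ifun).
  apply/integrableP; split; first exact/measurable_EFinP.
  under eq_integral => t _ do rewrite /= (ger0_norm (Ifun0 t)).
  exact: HI.
pose I := Rintegral mu setT Ifun.
have I0 : 0 < I.
  have I0' : 0 <= I by rewrite /I; apply: Rintegral_ge0 => t _; exact: Ifun0.
  rewrite lt_neqAle I0' andbT; apply/negP => /eqP I0.
  have E0 : (\int[mu]_x (EFin \o Ifun) x = 0)%E.
    have := integrable_fin_num measurableT Iint.
    rewrite fin_numE => /andP[_ _].
    rewrite -[LHS](@fineK _) ?(integrable_fin_num measurableT Iint) //.
    by rewrite -/(Rintegral mu setT Ifun) -/I -I0.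
  have : (\int[mu]_x `|(EFin \o Ifun) x| = 0)%E.
    by under eq_integral => t _ do rewrite /= (ger0_norm (Ifun0 t)).
  have mEI : measurable_fun setT (EFin \o Ifun) by exact/measurable_EFinP.
  move/(ae_eq_integral_abs mu measurableT mEI) => Hae.
  have : {ae mu, forall t, False}.
    apply: filterS2 Hae b0ae => t H bt.
    have := H Logic.I; rewrite /= => /eqP; rewrite eqe; apply/negP.
    rewrite gt_eqF // mulr_gt0 // powR_gt0 // mulr_gt0 //.
  move=> [N [mN muN sub]].
  move: Hmu0; apply/negP; rewrite -leNgt -muN; apply: le_measure; rewrite ?inE //.
  by move=> t _; apply: sub.
have c0 : 0 < rho - lambda0 * (1 - gamma) by rewrite subr_gt0.
have aE : a = gamma `^ gamma * (I / (rho - lambda0 * (1 - gamma))) `^ gamma by [].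
have a0 : 0 < a by rewrite aE mulr_gt0 // powR_gt0 // divr_gt0.
have ascal : a `^ (- gamma^-1) * I = (rho - lambda0 * (1 - gamma)) / gamma.
  by rewrite aE key_scal.
have mq : measurable_fun setT (fun t => (f t / (a * eta t * b0 t)) `^ gamma^-1).
  apply: (measurableT_comp (measurable_powR _)).
  apply: measurable_funM => //.
  apply: (measurableT_comp measurable_inv).
  apply: measurable_funM => //; exact: measurable_funM.
have NPhiE x t : NPhi x t = eta t * ((f t / (a * eta t * b0 t)) `^ gamma^-1 * pairing mu x b0).
  by [].
have mNPhi x : measurable_fun setT (NPhi x).
  apply: measurable_funM => //; exact: measurable_funM.
have NPhi_in : forall x, inX x -> inX (NPhi x).
  move=> x _; apply: Lfun_intro => //.
  rewrite unlock; apply: poweR_lty.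
  have [M HM] := ess_bound Hmu0 Hetai.
  set K := a `^ (- gamma^-1) * pairing mu x b0.
  pose v t := (f t / (eta t * b0 t)) `^ (p / gamma).
  have mv : measurable_fun setT v.
    apply: (measurableT_comp (measurable_powR _)).
    apply: measurable_funM => //.
    apply: (measurableT_comp measurable_inv).
    exact: measurable_funM.
  apply: (@le_lt_trans _ _ (\int[mu]_t (((`|K| * `|M|) `^ p)%:E * (v t)%:E))%E).
    apply: ae_ge0_le_integral => //.
    - by move=> t _; exact: poweR_ge0.
    - apply: (measurableT_comp (measurable_poweR _)).
      apply: measurableT_comp => //; exact/measurable_EFinP.
    - by move=> t _; rewrite -EFinM lee_fin mulr_ge0 // powR_ge0.
    - by apply: measurable_funeM; exact/measurable_EFinP.
    apply: filterS2 HM b0ae => t Mt bt _.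
    change ((`|(NPhi x t)%:E| `^ p) <= ((`|K| * `|M|) `^ p)%:E * (v t)%:E)%E.
    rewrite abse_EFin poweR_EFin -EFinM lee_fin NPhiE mulrA key_pt3 //.
    have -> : a `^ (- gamma^-1) * (eta t * (f t / (eta t * b0 t)) `^ gamma^-1) * pairing mu x b0
      = K * (eta t * (f t / (eta t * b0 t)) `^ gamma^-1) by rewrite /K; ring.
    rewrite /v (mulrC p) powRrM.
    by apply: bound_pt => //; [exact: ltW | exact: powR_ge0].
  have hv0 : forall t, [set: D] t -> (0 <= (v t)%:E)%E by move=> t _; rewrite lee_fin powR_ge0.
  have mvE : measurable_fun setT (fun t => (v t)%:E) by exact/measurable_EFinP.
  rewrite (ge0_integralZl_EFin mu measurableT hv0 mvE (powR_ge0 _ _)).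
  by rewrite lte_mul_pinfty // powR_ge0.
have mk : measurable_fun setT
    (fun t => f t `^ gamma^-1 * eta t `^ (1 - gamma^-1) * b0 t `^ (- gamma^-1)).
  apply: measurable_funM; first apply: measurable_funM.
  - exact: (measurableT_comp (measurable_powR _) mf).
  - exact: (measurableT_comp (measurable_powR _) meta).
  - exact: (measurableT_comp (measurable_powR _) mb0).
split; first split.
- exact: NPhi_in.
- move=> q Hq x Hx; rewrite /pairing.
  have mqq := Lfun_meas Hq.
  transitivity (Rintegral mu setT (fun t => (a `^ (- gamma^-1) * pairing mu x b0) *
     (f t `^ gamma^-1 * eta t `^ (1 - gamma^-1) * b0 t `^ (- gamma^-1) * q t))).
    apply: Rint_ae_eq => //.
    - exact: measurable_funM.
    - by apply: measurable_funM => //; exact: measurable_funM.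
    apply: filterS b0ae => t bt _; rewrite NPhiE.
    transitivity (eta t * (f t / (a * eta t * b0 t)) `^ gamma^-1 * pairing mu x b0 * q t).
      by ring.
    by rewrite key_pt //; ring.
  rewrite RintZ //; last by apply: measurable_funM.
  by rewrite /pairing; ring.
move=> g; split.
- move=> x Hx.
  case: HL => _ [Hdx _] [S [_ [_ HLx] _]].
  have iX : inX x := Hdx x Hx.
  have iLx : inX (L x) := (HLx x Hx).1.
  rewrite /pairing.
  have -> : Rintegral mu setT (fun t => (L x - NPhi x) t * b0 t) =
      Rintegral mu setT (fun t => L x t * b0 t - NPhi x t * b0 t).
    by apply: eq_Rintegral => t _; rewrite !fctE mulrBl.
  rewrite RintegralB //; last 2 first.
  - exact: holder_int Hp1 Hmu0 iLx Hb0.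
  - exact: holder_int Hp1 Hmu0 (NPhi_in x iX) Hb0.
  rewrite -/(pairing mu (L x) b0) HLb //.
  have gE : (gamma - 1) / gamma = 1 - gamma^-1.
    by field; exact: lt0r_neq0.
  have -> : Rintegral mu setT (fun t => NPhi x t * b0 t) =
      Rintegral mu setT (fun t => (a `^ (- gamma^-1) * pairing mu x b0) * Ifun t).
    apply: Rint_ae_eq => //.
    - exact: measurable_funM.
    - exact: measurable_funM.
    apply: filterS b0ae => t bt _; rewrite NPhiE /Ifun gE.
    exact: key_pt2.
  rewrite RintZ // -/I.
  have -> : a `^ (- gamma^-1) * pairing mu x b0 * I =
      pairing mu x b0 * ((rho - lambda0 * (1 - gamma)) / gamma).
    by rewrite -ascal; ring.
  rewrite /g /pairing; field; exact: lt0r_neq0.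
- have [A [mA muA0 muAf]] := @exists_fin_pos _ _ _ mu Hsf Hmu0.
  exists (\1_A); split; first exact: indic_Lfun.
  apply/eqP; rewrite gt_eqF //; apply: Hpos; split.
  + exact: indic_Lfun.
  + by apply: aeW => t; rewrite /indic; case: (_ \in _).
  + exact: indic_nrm.
Qed.


Lemma C_part (R : realType) :
  (forall (D : pseudoPMetricType R)
     (mu : {measure set (borelType D) -> \bar R}) (gamma rho lambda0 : R)
     (eta f b0 : D -> R)
     (domL : (D -> R) -> Prop) (L : (D -> R) -> D -> R),
   let inX := fun x : D -> R => continuous x in
   let nrm := fun x : D -> R => Cnorm x in
   let nonneg := fun x : D -> R => forall t, 0 <= x t in
   hausdorff_space D -> compact [set: D] -> (0 < mu setT)%E ->
   standing_L inX nrm nonneg domL L ->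
   0 < gamma -> gamma != 1 -> 0 < rho ->
   (* b0* is the finite measure b0 dmu with continuous positive density b0 *)
   continuous b0 -> (forall t, 0 < b0 t) ->
   mu.-integrable setT (fun t => (b0 t)%:E) ->
   (forall x, strictly_pos inX nrm nonneg x -> 0 < pairing mu x b0) ->
   (forall x, domL x -> pairing mu (L x) b0 = lambda0 * pairing mu x b0) ->
   rho > lambda0 * (1 - gamma) ->
   (1 < gamma -> (fun t => b0 t `^ (1 - gamma) / f t) \in Lfun mu +oo%E) ->
   continuous eta -> (forall t, 0 < eta t) ->
   continuous f -> (forall t, 0 < f t) ->
   let NPhi := fun x => Nmul (T := borelType D) eta (Phi mu f eta b0 gamma rho lambda0 x) in
   let a := alpha mu f eta b0 gamma rho lambda0 in
   (* (i): X^* = finite signed Borel measures q = qp - qn *)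
   ((forall x, inX x -> inX (NPhi x)) /\
    (forall qp qn : {measure set (borelType D) -> \bar R},
       (qp setT < +oo)%E -> (qn setT < +oo)%E ->
       forall x, inX x ->
       Rintegral qp setT (NPhi x) - Rintegral qn setT (NPhi x) =
       (a `^ (- gamma^-1) *
        (Rintegral qp setT (fun t => f t `^ gamma^-1 * eta t `^ (1 - gamma^-1)
                                      * b0 t `^ (- gamma^-1))
         - Rintegral qn setT (fun t => f t `^ gamma^-1 * eta t `^ (1 - gamma^-1)
                                      * b0 t `^ (- gamma^-1))))
       * pairing mu x b0)) /\
   (let g := (lambda0 - rho) / gamma in
    (forall x, domL x -> pairing mu (L x - NPhi x) b0 = g * pairing mu x b0) /\
    (exists x, inX x /\ pairing mu x b0 <> 0))).

Proof.
move=> D mu gamma rho lambda0 eta f b0 domL L inX nrm nonneg Hhaus cK Hmu0 HL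
  Hg0 Hg1 Hrho cb0 Hb0 Hb0int Hpos HLb Hrl Hg1' ceta Heta cf Hf NPhi a.
have [m m0 Hm] := cont_min cK cb0 Hb0.
have muf : (mu setT < +oo)%E.
  have H1 : (m%:E * mu setT <= \int[mu]_x `|(EFin \o b0) x|)%E.
    rewrite -integral_cst //.
    have m1 : measurable_fun [set: borelType D] (fun x : borelType D => `|(EFin \o b0) x|%E).
      apply: measurableT_comp => //; apply/measurable_EFinP; exact: cont_meas.
    apply: ge0_le_integral => //; first by move=> t _; rewrite lee_fin ltW.
    move=> t _ /=; rewrite lee_fin (le_trans (Hm t)) //; exact: ler_norm.
  have H2 := proj2 (integrableP _ _ _ Hb0int).
  have H3 := le_lt_trans H1 H2.
  rewrite ltNge leye_eq; apply/negP => /eqP Hy; move: H3.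
  by rewrite Hy mulry gtr0_sg // mul1e ltxx.
have lowb (h : D -> R) (mh : R) : continuous h -> 0 < mh -> (forall t, mh <= h t) ->
    0 < Rintegral mu setT h.
  move=> ch mh0 Hh.
  apply: (@lt_le_trans _ _ (Rintegral mu setT (fun _ => mh))).
    by rewrite Rintegral_cst // mulr_gt0 // fine_gt0 // Hmu0 muf.
  apply: (@le_Rintegral _ _ R mu setT (fun _ => mh) h measurableT).
  - exact: cont_integrable (@cst_continuous _ _ mh) muf.
  - exact: cont_integrable ch muf.
  - by move=> t _; exact: Hh.
pose Ifun t := f t `^ gamma^-1 * (eta t * b0 t) `^ ((gamma - 1) / gamma).
have ceb : continuous (fun t => eta t * b0 t) by move=> t; exact: (continuousM (ceta t) (cb0 t)).
have cIfun : continuous Ifun.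
  move=> t; exact: (continuousM (cont_powR cf Hf t)
    (cont_powR ceb (fun s => mulr_gt0 (Heta s) (Hb0 s)) t)).
pose I := Rintegral mu setT Ifun.
have I0 : 0 < I.
  have [mI mI0 HmI] := cont_min cK cIfun (fun t => mulr_gt0 (powR_gt0 _ (Hf t))
     (powR_gt0 _ (mulr_gt0 (Heta t) (Hb0 t)))).
  exact: lowb cIfun mI0 HmI.
have c0 : 0 < rho - lambda0 * (1 - gamma) by rewrite subr_gt0.
have aE : a = gamma `^ gamma * (I / (rho - lambda0 * (1 - gamma))) `^ gamma by [].
have a0 : 0 < a by rewrite aE mulr_gt0 // powR_gt0 // divr_gt0.
have ascal : a `^ (- gamma^-1) * I = (rho - lambda0 * (1 - gamma)) / gamma.
  by rewrite aE key_scal.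
pose k t := f t `^ gamma^-1 * eta t `^ (1 - gamma^-1) * b0 t `^ (- gamma^-1).
have ck : continuous k.
  move=> t; exact: (continuousM (continuousM (cont_powR cf Hf t) (cont_powR ceta Heta t))
    (cont_powR cb0 Hb0 t)).
have NPhiE x : NPhi x = (fun t => (a `^ (- gamma^-1) * pairing mu x b0) * k t).
  apply/funext => t; rewrite /NPhi /Nmul /Phi /k.
  transitivity (eta t * (f t / (a * eta t * b0 t)) `^ gamma^-1 * pairing mu x b0).
    by ring.
  by rewrite key_pt //; ring.
have cNPhi x : continuous (NPhi x).
  rewrite NPhiE => t; exact: (@continuousM R D (fun _ => a `^ (- gamma^-1) * pairing mu x b0) k t (@cst_continuous D R _ t) (ck t)).
split; first split.
- by move=> x _; exact: cNPhi.
- move=> qp qn _ _ x _.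
  rewrite NPhiE !RintZ //; try exact: cont_meas.
  by ring.
move=> g; split.
- move=> x Hx.
  case: HL => _ [Hdx _] [S [_ [_ HLx] _]].
  have iX : inX x := Hdx x Hx.
  have iLx : inX (L x) := (HLx x Hx).1.
  rewrite /pairing.
  have -> : Rintegral mu setT (fun t => (L x - NPhi x) t * b0 t) =
      Rintegral mu setT (fun t => L x t * b0 t - NPhi x t * b0 t).
    by apply: eq_Rintegral => t _; rewrite !fctE mulrBl.
  rewrite RintegralB //; last 2 first.
  - by apply: cont_integrable => // t; exact: (continuousM (iLx t) (cb0 t)).
  - by apply: cont_integrable => // t; exact: (continuousM (cNPhi x t) (cb0 t)).
  rewrite -/(pairing mu (L x) b0) HLb //.
  have gE : (gamma - 1) / gamma = 1 - gamma^-1.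
    by field; exact: lt0r_neq0.
  have -> : Rintegral mu setT (fun t => NPhi x t * b0 t) =
      Rintegral mu setT (fun t => (a `^ (- gamma^-1) * pairing mu x b0) * Ifun t).
    apply: eq_Rintegral => t _.
    rewrite /NPhi /Nmul /Phi /Ifun gE.
    exact: key_pt2.
  rewrite RintZ //; last exact: cont_meas.
  rewrite -/I.
  have -> : a `^ (- gamma^-1) * pairing mu x b0 * I =
      pairing mu x b0 * ((rho - lambda0 * (1 - gamma)) / gamma).
    by rewrite -ascal; ring.
  rewrite /g /pairing; field; exact: lt0r_neq0.
- exists (fun _ => 1); split; first exact: cst_continuous.
  apply/eqP; rewrite gt_eqF //; rewrite /pairing.
  under eq_Rintegral do rewrite mul1r.
  exact: lowb cb0 m0 Hm.
Qed.

Theorem lemma3p6 (R : realType) :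
  (* ===================== Case X = L^p(D, mu), 1 <= p < oo ===================== *)
  (forall (d : measure_display) (D : measurableType d)
     (mu : {measure set D -> \bar R}) (p gamma rho lambda0 : R)
     (eta f b0 : D -> R)
     (domL : (D -> R) -> Prop) (L : (D -> R) -> D -> R),
   let inX := fun x : D -> R => x \in Lfun mu p%:E in
   let nrm := LpN mu p in
   let nonneg := fun x : D -> R => {ae mu, forall t, 0 <= x t} in
   (* X^* is identified with L^{p'}(D, mu), p' the Hoelder conjugate of p *)
   let inXs := fun q : D -> R => q \in Lfun mu (hoelder_conjugate p%:E) in
   sigma_finite setT mu -> (0 < mu setT)%E -> 1 <= p ->
   standing_L inX nrm nonneg domL L ->
   0 < gamma -> gamma != 1 -> 0 < rho ->
   (* b0* in X^*_{++}, L^* b0* = lambda0* b0* *)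
   inXs b0 ->
   (forall x, strictly_pos inX nrm nonneg x -> 0 < pairing mu x b0) ->
   (forall x, domL x -> pairing mu (L x) b0 = lambda0 * pairing mu x b0) ->
   rho > lambda0 * (1 - gamma) ->
   (1 < gamma -> (fun t => b0 t `^ (1 - gamma) / f t) \in Lfun mu +oo%E) ->
   (forall t, 0 < eta t) -> (forall t, 0 < f t) ->
   eta \in Lfun mu +oo%E -> f \in Lfun mu +oo%E ->
   (\int[mu]_t (f t `^ gamma^-1 * (eta t * b0 t) `^ ((gamma - 1) / gamma))%:E < +oo)%E ->
   (\int[mu]_t ((f t / (eta t * b0 t)) `^ (p / gamma))%:E < +oo)%E ->
   let NPhi := fun x => Nmul eta (Phi mu f eta b0 gamma rho lambda0 x) in
   let a := alpha mu f eta b0 gamma rho lambda0 in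
   (* (i) *)
   ((forall x, inX x -> inX (NPhi x)) /\
    (forall q, inXs q -> forall x, inX x ->
       pairing mu (NPhi x) q =
       (a `^ (- gamma^-1) *
        Rintegral mu setT (fun t => f t `^ gamma^-1 * eta t `^ (1 - gamma^-1)
                                     * b0 t `^ (- gamma^-1) * q t))
       * pairing mu x b0)) /\
   (* (ii) *)
   (let g := (lambda0 - rho) / gamma in
    (forall x, domL x -> pairing mu (L x - NPhi x) b0 = g * pairing mu x b0) /\
    (exists x, inX x /\ pairing mu x b0 <> 0)))
  /\
  (* ===================== Case X = C(D), D compact metric ===================== *)
  (forall (D : pseudoPMetricType R)
     (mu : {measure set (borelType D) -> \bar R}) (gamma rho lambda0 : R)
     (eta f b0 : D -> R)
     (domL : (D -> R) -> Prop) (L : (D -> R) -> D -> R),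
   let inX := fun x : D -> R => continuous x in
   let nrm := fun x : D -> R => Cnorm x in
   let nonneg := fun x : D -> R => forall t, 0 <= x t in
   hausdorff_space D -> compact [set: D] -> (0 < mu setT)%E ->
   standing_L inX nrm nonneg domL L ->
   0 < gamma -> gamma != 1 -> 0 < rho ->
   (* b0* is the finite measure b0 dmu with continuous positive density b0 *)
   continuous b0 -> (forall t, 0 < b0 t) ->
   mu.-integrable setT (fun t => (b0 t)%:E) ->
   (forall x, strictly_pos inX nrm nonneg x -> 0 < pairing mu x b0) ->
   (forall x, domL x -> pairing mu (L x) b0 = lambda0 * pairing mu x b0) ->
   rho > lambda0 * (1 - gamma) ->
   (1 < gamma -> (fun t => b0 t `^ (1 - gamma) / f t) \in Lfun mu +oo%E) ->
   continuous eta -> (forall t, 0 < eta t) ->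
   continuous f -> (forall t, 0 < f t) ->
   let NPhi := fun x => Nmul (T := borelType D) eta (Phi mu f eta b0 gamma rho lambda0 x) in
   let a := alpha mu f eta b0 gamma rho lambda0 in
   (* (i): X^* = finite signed Borel measures q = qp - qn *)
   ((forall x, inX x -> inX (NPhi x)) /\
    (forall qp qn : {measure set (borelType D) -> \bar R},
       (qp setT < +oo)%E -> (qn setT < +oo)%E ->
       forall x, inX x ->
       Rintegral qp setT (NPhi x) - Rintegral qn setT (NPhi x) =
       (a `^ (- gamma^-1) *
        (Rintegral qp setT (fun t => f t `^ gamma^-1 * eta t `^ (1 - gamma^-1)
                                      * b0 t `^ (- gamma^-1))
         - Rintegral qn setT (fun t => f t `^ gamma^-1 * eta t `^ (1 - gamma^-1)
                                      * b0 t `^ (- gamma^-1))))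
       * pairing mu x b0)) /\
   (* (ii) *)
   (let g := (lambda0 - rho) / gamma in
    (forall x, domL x -> pairing mu (L x - NPhi x) b0 = g * pairing mu x b0) /\
    (exists x, inX x /\ pairing mu x b0 <> 0))).
Proof.
split.
- exact: Lp_part.
- exact: C_part.
Qed.
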